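(* Let $N\ge1$, $K>0$, $r_1,\dots,r_N>0$, let $(\mu_{ij})$ be a nonnegative, symmetric, irreducible $N\times N$ matrix, and let $\bar v$ be the unique positive stationary solution of $$\frac{dv_i}{dt}=v_i\left[r_i-\frac{1}{K}\sum_{j=1}^Nr_jv_j\right]+\sum_{j=1}^N\mu_{ij}(v_j-v_i),\qquad i=1,\dots,N.$$ Let $\bar v^\perp=\{h\in\mathbb{R}^N:\sum_ih_i\bar v_i=0\}$ and $\mathcal{E}(h)=\sum_ih_i^2$. Then there exists $C_1>0$ such that for all $h\in\bar v^\perp$, $$C_1\mathcal{E}(h)\le\sum_{i,j=1}^N\mu_{ij}\bar v_i\bar v_j\left(\frac{h_i}{\bar v_i}-\frac{h_j}{\bar v_j}\right)^2.$$ Moreover, this holds with $C_1=\lambda_2$, where $\lambda_2$ is the smallest strictly positive eigenvalue $\lambda$ of the linear eigenvalue problem $$h_i\sum_{j=1}^N\mu_{ij}\frac{\bar v_j}{\bar v_i}-\sum_{j=1}^N\mu_{ij}h_j=\lambda h_i,\qquad i=1,\dots,N.$$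
   Context: A stationary solution is a vector at which the right-hand side vanishes for every $i$; positive means all components strictly positive. *)

(* Defs.v *)
From HB Require Import structures.
From mathcomp Require Import all_boot all_order all_algebra.
From mathcomp Require Import reals.
Set Implicit Arguments. Unset Strict Implicit. Unset Printing Implicit Defensive.
Import Order.TTheory GRing.Theory Num.Theory.
Local Open Scope ring_scope.

(* A square matrix is irreducible iff its directed graph (edge i -> j when
   A i j != 0) is strongly connected. *)
Definition irreducible_mx (R : realType) (N : nat) (A : 'M[R]_N) : Prop :=
  forall i j : 'I_N, connect (fun k l => A k l != 0) i j.

Definition rhs (R : realType) (N : nat) (K : R) (r : 'I_N -> R)
  (mu : 'M[R]_N) (v : 'I_N -> R) (i : 'I_N) : R :=
  v i * (r i - K^-1 * \sum_(j < N) r j * v j) + \sum_(j < N) mu i j * (v j - v i).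

Definition stationary (R : realType) (N : nat) (K : R) (r : 'I_N -> R)
  (mu : 'M[R]_N) (v : 'I_N -> R) : Prop :=
  forall i, rhs K r mu v i = 0.

Definition energy (R : realType) (N : nat) (h : 'I_N -> R) : R :=
  \sum_(i < N) h i ^+ 2.

Definition dform (R : realType) (N : nat) (mu : 'M[R]_N) (vb h : 'I_N -> R) : R :=
  \sum_(i < N) \sum_(j < N)
     mu i j * vb i * vb j * (h i / vb i - h j / vb j) ^+ 2.

Definition lin_eigenvalue (R : realType) (N : nat) (mu : 'M[R]_N)
  (vb : 'I_N -> R) (lam : R) : Prop :=
  exists h : 'I_N -> R, (exists i, h i != 0) /\
    forall i, h i * (\sum_(j < N) mu i j * (vb j / vb i))
              - \sum_(j < N) mu i j * h j = lam * h i.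

Definition smallest_pos_eigenvalue (R : realType) (N : nat) (mu : 'M[R]_N)
  (vb : 'I_N -> R) (lam : R) : Prop :=
  [/\ lin_eigenvalue mu vb lam, 0 < lam &
      forall l, lin_eigenvalue mu vb l -> 0 < l -> lam <= l].

(* Main.v *)
Require Import Defs.
From HB Require Import structures.
From mathcomp Require Import all_boot all_order all_algebra.
From mathcomp Require Import reals.
From mathcomp Require Import boolp classical_sets topology normedtype derive.
From mathcomp Require Import ring lra.
Import Order.TTheory GRing.Theory Num.Theory.
Import numFieldNormedType.Exports.
Local Open Scope ring_scope.

Module Helpers.
Set Implicit Arguments. Unset Strict Implicit. Unset Printing Implicit Defensive.
Local Open Scope classical_set_scope.
Local Open Scope ring_scope.

Definition Bf (R : realType) (N : nat) (mu : 'M[R]_N) (vb h u : 'I_N -> R) : R :=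
  \sum_(i < N) \sum_(j < N)
     mu i j * vb i * vb j * ((h i / vb i - h j / vb j) * (u i / vb i - u j / vb j)).

Definition Lop (R : realType) (N : nat) (mu : 'M[R]_N) (vb h : 'I_N -> R) (i : 'I_N) : R :=
  h i * (\sum_(j < N) mu i j * (vb j / vb i)) - \sum_(j < N) mu i j * h j.

Definition dot (R : realType) (N : nat) (h u : 'I_N -> R) : R := \sum_(i < N) h i * u i.

Lemma dform_B (R : realType) (N : nat) (mu : 'M[R]_N) (vb h : 'I_N -> R) :
  dform mu vb h = Bf mu vb h h.
Proof. by apply: eq_bigr => i _; apply: eq_bigr => j _; rewrite expr2. Qed.

Lemma B_L (R : realType) (N : nat) (mu : 'M[R]_N) (vb h u : 'I_N -> R) :
  (forall i j, mu i j = mu j i) -> (forall i, 0 < vb i) ->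
  Bf mu vb h u = 2 * \sum_(i < N) u i * Lop mu vb h i.
Proof.
move=> sym vbp.
have vb0 : forall i, vb i != 0 by move=> i; rewrite gt_eqF.
pose T1 i j := mu i j * (vb j / vb i) * h i * u i.
pose T4 i j := mu i j * (vb i / vb j) * h j * u j.
pose T2 i j := mu i j * h i * u j.
pose T3 i j := mu i j * h j * u i.
have E : forall i j, mu i j * vb i * vb j * ((h i / vb i - h j / vb j) * (u i / vb i - u j / vb j))
   = (T1 i j + T4 i j) - (T2 i j + T3 i j).
  move=> i j; rewrite /T1 /T2 /T3 /T4; field.
  by rewrite vb0 vb0.
rewrite /Bf.
under eq_bigr => i _ do under eq_bigr => j _ do rewrite E.
have S14 : \sum_(i < N) \sum_(j < N) T4 i j = \sum_(i < N) \sum_(j < N) T1 i j.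
  rewrite exchange_big; apply: eq_bigr => i _; apply: eq_bigr => j _.
  by rewrite /T1 /T4 sym.
have S23 : \sum_(i < N) \sum_(j < N) T2 i j = \sum_(i < N) \sum_(j < N) T3 i j.
  rewrite exchange_big; apply: eq_bigr => i _; apply: eq_bigr => j _.
  by rewrite /T2 /T3 sym.
have -> : \sum_(i < N) \sum_(j < N) ((T1 i j + T4 i j) - (T2 i j + T3 i j)) =
  (\sum_(i < N) \sum_(j < N) T1 i j + \sum_(i < N) \sum_(j < N) T4 i j) -
  (\sum_(i < N) \sum_(j < N) T2 i j + \sum_(i < N) \sum_(j < N) T3 i j).
  rewrite -!big_split -sumrB; apply: eq_bigr => i _.
  by rewrite -!big_split -sumrB.
rewrite S14 S23 /Lop.
have H1 : \sum_(i < N) \sum_(j < N) T1 i j =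
   \sum_(i < N) u i * (h i * \sum_(j < N) mu i j * (vb j / vb i)).
  apply: eq_bigr => i _; rewrite !mulr_sumr; apply: eq_bigr => j _.
  by rewrite /T1; ring.
have H3 : \sum_(i < N) \sum_(j < N) T3 i j =
   \sum_(i < N) u i * \sum_(j < N) mu i j * h j.
  apply: eq_bigr => i _; rewrite !mulr_sumr; apply: eq_bigr => j _.
  by rewrite /T3; ring.
rewrite H1 H3.
have -> : \sum_(i < N) u i * (h i * \sum_(j < N) mu i j * (vb j / vb i) - \sum_(j < N) mu i j * h j)
  = \sum_(i < N) u i * (h i * \sum_(j < N) mu i j * (vb j / vb i)) - \sum_(i < N) u i * \sum_(j < N) mu i j * h j.
  by rewrite -sumrB; apply: eq_bigr => i _; ring.
ring.
Qed.

Lemma B_vb (R : realType) (N : nat) (mu : 'M[R]_N) (vb h : 'I_N -> R) :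
  (forall i, 0 < vb i) -> Bf mu vb h vb = 0.
Proof.
move=> vbp; apply: big1 => i _; apply: big1 => j _.
by rewrite !divff ?gt_eqF // subrr mulr0 mulr0.
Qed.

Lemma B_expand (R : realType) (N : nat) (mu : 'M[R]_N) (vb h u : 'I_N -> R) (t : R) :
  Bf mu vb (fun i => h i + t * u i) (fun i => h i + t * u i) =
  Bf mu vb h h + 2 * t * Bf mu vb h u + t ^+ 2 * Bf mu vb u u.
Proof.
rewrite /Bf !mulr_sumr -!big_split; apply: eq_bigr => i _.
rewrite !mulr_sumr -!big_split; apply: eq_bigr => j _ /=.
rewrite !mulrDl !mulrDr; ring.
Qed.

Lemma E_expand (R : realType) (N : nat) (h u : 'I_N -> R) (t : R) :
  energy (fun i => h i + t * u i) =
  energy h + 2 * t * dot h u + t ^+ 2 * energy u.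
Proof.
rewrite /energy /dot !mulr_sumr -!big_split; apply: eq_bigr => i _ /=; ring.
Qed.

Lemma B_scale (R : realType) (N : nat) (mu : 'M[R]_N) (vb h : 'I_N -> R) (c : R) :
  Bf mu vb (fun i => c * h i) (fun i => c * h i) = c ^+ 2 * Bf mu vb h h.
Proof.
rewrite /Bf !mulr_sumr; apply: eq_bigr => i _.
rewrite !mulr_sumr; apply: eq_bigr => j _ /=; rewrite !mulrA; ring.
Qed.

Lemma E_scale (R : realType) (N : nat) (h : 'I_N -> R) (c : R) :
  energy (fun i => c * h i) = c ^+ 2 * energy h.
Proof. by rewrite /energy mulr_sumr; apply: eq_bigr => i _; ring. Qed.

Lemma E_ge0 (R : realType) (N : nat) (h : 'I_N -> R) : 0 <= energy h.
Proof. by apply: sumr_ge0 => i _; rewrite sqr_ge0. Qed.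

Lemma E_eq0 (R : realType) (N : nat) (h : 'I_N -> R) :
  energy h = 0 -> forall i, h i = 0.
Proof.
move=> /eqP; rewrite psumr_eq0 => [/allP H i|i _]; last by rewrite sqr_ge0.
by have /implyP := H i (mem_index_enum i); move=> /(_ isT); rewrite sqrf_eq0 => /eqP.
Qed.

Lemma B_ge0 (R : realType) (N : nat) (mu : 'M[R]_N) (vb h : 'I_N -> R) :
  (forall i j, 0 <= mu i j) -> (forall i, 0 < vb i) -> 0 <= Bf mu vb h h.
Proof.
move=> mup vbp; apply: sumr_ge0 => i _; apply: sumr_ge0 => j _.
apply: mulr_ge0; last by rewrite -expr2 sqr_ge0.
by apply: mulr_ge0; [apply: mulr_ge0|]; rewrite ?mup ?ltW.
Qed.

Lemma quad0 (R : realType) (a b : R) : (forall t, 0 <= 2 * t * a + t ^+ 2 * b) -> a = 0.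
Proof.
move=> H; pose c := b ^+ 2 + 1.
have c0 : 0 < c by rewrite /c; nra.
have := H (- a / c).
have -> : 2 * (- a / c) * a + (- a / c) ^+ 2 * b = a ^+ 2 * (b - 2 * c) / c ^+ 2.
  by field; rewrite gt_eqF.
rewrite pmulr_lge0 ?invr_gt0 ?exprn_gt0 //.
have hb : b - 2 * c < 0.
  rewrite /c; nra.
rewrite nmulr_lge0 // => H2.
by apply/eqP; rewrite -sqrf_eq0 eq_le H2 sqr_ge0.
Qed.

Lemma kernelB (R : realType) (N : nat) (mu : 'M[R]_N) (vb h : 'I_N -> R) :
  (forall i j, 0 <= mu i j) -> (forall i, 0 < vb i) -> irreducible_mx mu ->
  Bf mu vb h h = 0 -> forall i j, h i / vb i = h j / vb j.
Proof.
move=> mup vbp irr B0.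
have tge0 : forall i j, 0 <= mu i j * vb i * vb j *
    ((h i / vb i - h j / vb j) * (h i / vb i - h j / vb j)).
  move=> i j; apply: mulr_ge0; last by rewrite -expr2 sqr_ge0.
  by apply: mulr_ge0; [apply: mulr_ge0|]; rewrite ?mup ?ltW.
have edge : forall k l, mu k l != 0 -> h k / vb k = h l / vb l.
  move=> k l mkl.
  have S0 : \sum_(j < N) mu k j * vb k * vb j *
    ((h k / vb k - h j / vb j) * (h k / vb k - h j / vb j)) = 0.
    move: B0 => /eqP; rewrite /Bf psumr_eq0 => [/allP H|i _]; last first.
      by apply: sumr_ge0 => j _; apply: tge0.
    by apply/eqP; have /implyP := H k (mem_index_enum k); apply.
  move: S0 => /eqP; rewrite psumr_eq0 => [/allP H|j _]; last exact: tge0.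
  have /implyP /(_ isT) := H l (mem_index_enum l).
  rewrite mulf_eq0 => /orP [|]; last first.
    by rewrite -expr2 sqrf_eq0 subr_eq0 => /eqP.
  rewrite !mulf_eq0 (negbTE mkl) !gt_eqF //.
move=> i j; have /connectP [p pth ->] := irr i j.
elim: p i pth => [|a p IH] i //= /andP [eia pth].
by rewrite (edge _ _ eia) IH.
Qed.

Lemma core (R : realType) (N : nat) (mu : 'M[R]_N) (vb hs : 'I_N -> R) :
  (forall i j, 0 <= mu i j) -> (forall i j, mu i j = mu j i) ->
  irreducible_mx mu -> (forall i, 0 < vb i) ->
  dot hs vb = 0 -> energy hs = 1 ->
  (forall h, dot h vb = 0 -> energy h = 1 -> Bf mu vb hs hs <= Bf mu vb h h) ->
  [/\ 0 < Bf mu vb hs hs,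
      (forall h, dot h vb = 0 -> Bf mu vb hs hs * energy h <= Bf mu vb h h) &
      lin_eigenvalue mu vb (Bf mu vb hs hs / 2)].
Proof.
move=> mup sym irr vbp hsV hs1 hmin.
set m := Bf mu vb hs hs.
have dotl : forall c h, dot (fun i => c * h i) vb = c * dot h vb.
  by move=> c h; rewrite /dot mulr_sumr; apply: eq_bigr => i _ /=; ring.
have dotD : forall h u t, dot (fun i => h i + t * u i) vb = dot h vb + t * dot u vb.
  by move=> h u t; rewrite /dot mulr_sumr -big_split; apply: eq_bigr => i _ /=; ring.
have part2 : forall h, dot h vb = 0 -> m * energy h <= Bf mu vb h h.
  move=> h hV; have [E0|En0] := eqVneq (energy h) 0.
    by rewrite E0 mulr0 B_ge0.
  have Ep : 0 < energy h by rewrite lt_def En0 E_ge0.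
  set s := Num.sqrt (energy h).
  have sp : 0 < s by rewrite sqrtr_gt0.
  have s2 : s ^+ 2 = energy h by rewrite sqr_sqrtr // ltW.
  have := hmin (fun i => s^-1 * h i).
  rewrite dotl hV mulr0 E_scale B_scale -s2 exprVn mulVf ?expf_neq0 ?gt_eqF //.
  move=> /(_ erefl erefl) H.
  have := ler_wpM2r (ltW (exprn_gt0 2 sp)) H.
  by rewrite mulrAC mulVf ?mul1r // expf_neq0 // gt_eqF.
have hsnz : exists i, hs i != 0.
  apply/existsP; apply: contraT; rewrite negb_exists => /forallP H.
  move: hs1; rewrite /energy big1 => [/eqP|i _]; first by rewrite eq_sym oner_eq0.
  by have := H i; rewrite negbK => /eqP ->; rewrite expr0n.
have mpos : 0 < m.
  rewrite lt_def B_ge0 // andbT; apply/eqP => m0.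
  have K := kernelB mup vbp irr m0.
  case: hsnz => i0 hi0.
  set c := hs i0 / vb i0.
  have hsE : forall j, hs j = c * vb j.
    by move=> j; rewrite /c (K i0 j) divfK // gt_eqF.
  have : dot hs vb = c * \sum_(j < N) vb j ^+ 2.
    by rewrite /dot mulr_sumr; apply: eq_bigr => j _; rewrite hsE; ring.
  rewrite hsV => /esym /eqP; rewrite mulf_eq0 => /orP [/eqP c0|].
    by move: hi0; rewrite hsE c0 mul0r eqxx.
  rewrite psumr_eq0 => [/allP /(_ i0 (mem_index_enum i0)) /=|j _]; last exact: sqr_ge0.
  by rewrite sqrf_eq0 gt_eqF.
split => //.
pose w i := 2 * Lop mu vb hs i - m * hs i.
have wV : dot w vb = 0.
  have := @B_vb R N mu vb hs vbp; rewrite B_L // => H.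
  have -> : dot w vb = 2 * \sum_(i < N) vb i * Lop mu vb hs i - m * dot hs vb.
    by rewrite /dot mulr_sumr mulr_sumr -sumrB; apply: eq_bigr => i _; rewrite /w; ring.
  by rewrite H hsV; ring.
have var : forall t, 0 <= 2 * t * (Bf mu vb hs w - m * dot hs w) +
                          t ^+ 2 * (Bf mu vb w w - m * energy w).
  move=> t; have := part2 (fun i => hs i + t * w i).
  rewrite dotD hsV wV mulr0 addr0 => /(_ erefl).
  rewrite B_expand E_expand hs1 -/m => H; lra.
have := quad0 var; rewrite B_L // => H.
have Ew : energy w = 0.
  apply/eqP; rewrite -subr_eq0 subr0 -H -subr_eq0; apply/eqP.
  rewrite /energy /dot mulr_sumr mulr_sumr -!sumrB; apply: big1 => i _.
  by rewrite /w; ring.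
exists hs; split => // i.
have := E_eq0 Ew i; rewrite /w /Lop => /eqP; rewrite subr_eq0 => /eqP H2.
by rewrite mulrAC -H2; field.
Qed.

Lemma cM (R : realType) (T : topologicalType) (f g : T -> R) :
  continuous f -> continuous g -> continuous (fun x => f x * g x).
Proof. by move=> cf cg x; exact: (continuousM (cf x) (cg x)). Qed.

Lemma cB (R : realType) (T : topologicalType) (f g : T -> R) :
  continuous f -> continuous g -> continuous (fun x => f x - g x).
Proof. by move=> cf cg x; exact: (continuousB (cf x) (cg x)). Qed.

Lemma cS (R : realType) (T : topologicalType) (I : Type) (s : seq I) (f : I -> T -> R) :
  (forall i, continuous (f i)) -> continuous (fun x => \sum_(i <- s) f i x).
Proof.
move=> cf; elim: s => [|a s IH].
  have -> : (fun x => \sum_(i <- [::]) f i x) = (fun=> 0) :> (T -> R).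
    by apply/funext => x; rewrite big_nil.
  exact: cst_continuous.
have -> : (fun x => \sum_(i <- a :: s) f i x) = (fun x => f a x + \sum_(i <- s) f i x).
  by apply/funext => x; rewrite big_cons.
by move=> x; exact: (continuousD (cf a x) (IH x)).
Qed.

Lemma cC (R : realType) (T : topologicalType) (c : R) : continuous (fun _ : T => c).
Proof. exact: cst_continuous. Qed.

Lemma cX2 (R : realType) (T : topologicalType) (f : T -> R) :
  continuous f -> continuous (fun x => f x ^+ 2).
Proof.
move=> cf; have -> : (fun x => f x ^+ 2) = (fun x => f x * f x) by apply/funext => x; rewrite expr2.
exact: cM.
Qed.

Lemma ccoord (R : realType) (N : nat) (i : 'I_N) :
  continuous (fun v : 'rV[R]_N => v ord0 i).
Proof. exact: coord_continuous. Qed.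

Lemma minimizer (R : realType) (N : nat) (mu : 'M[R]_N) (vb : 'I_N -> R) :
  (exists h, dot h vb = 0 /\ energy h = 1) ->
  exists hs, [/\ dot hs vb = 0, energy hs = 1 &
    forall h, dot h vb = 0 -> energy h = 1 -> Bf mu vb hs hs <= Bf mu vb h h].
Proof.
move=> [h0 [h0V h01]].
pose A := [set v : 'rV[R]_N | energy (fun i => v ord0 i) = 1 /\ dot (fun i => v ord0 i) vb = 0].
pose f := fun v : 'rV[R]_N => Bf mu vb (fun i => v ord0 i) (fun i => v ord0 i).
have rowK : forall h : 'I_N -> R, (fun i => (\row_j h j) ord0 i) = h.
  by move=> h; apply/funext => i; rewrite mxE.
have A0 : A !=set0 by exists (\row_j h0 j); rewrite /A /= rowK.
have ce : continuous (fun v : 'rV[R]_N => energy (fun i => v ord0 i)).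
  by apply: cS => i; apply: cX2; apply: ccoord.
have cd : continuous (fun v : 'rV[R]_N => dot (fun i => v ord0 i) vb).
  by apply: cS => i; apply: cM; [apply: ccoord | apply: cC].
have cf : continuous f.
  apply: cS => i; apply: cS => j; apply: cM; first exact: cC.
  by apply: cM; apply: cB; apply: cM; (apply: ccoord || apply: cC).
have clA : closed A.
  have -> : A = (fun v : 'rV[R]_N => energy (fun i => v ord0 i)) @^-1` [set 1] `&`
              (fun v : 'rV[R]_N => dot (fun i => v ord0 i) vb) @^-1` [set 0] by [].
  apply: closedI.
    by apply: preimage_closed; [move=> v _; apply: ce | exact: closed_eq].
  by apply: preimage_closed; [move=> v _; apply: cd | exact: closed_eq].
have sAB : A `<=` [set v : 'rV[R]_N | forall i, `[(-1), 1]%classic (v ord0 i)].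
  move=> v [E1 _] i /=; rewrite in_itv /=.
  have : v ord0 i ^+ 2 <= 1.
    rewrite -E1 /energy (bigD1 i) //= lerDl; apply: sumr_ge0 => k _; exact: sqr_ge0.
  move=> H; apply/andP; split; nra.
have cB := (@rV_compact R N (fun=> `[(-1), 1]%classic) (fun=> @segment_compact R (-1) 1)).
have cA : compact A := subclosed_compact clA cB sAB.
have [c cinA cmin] := compact_EVT_min A0 cA (continuous_subspaceT cf).
move: (cinA); rewrite inE => -[c1 cV].
exists (fun i => c ord0 i); split => // h hV h1.
have := cmin (\row_j h j); rewrite /f rowK; apply.
by rewrite inE /A /= rowK.
Qed.

End Helpers.
Import Helpers.

Theorem lemma5p3 (R : realType) (N : nat) (K : R) (r : 'I_N -> R)
  (mu : 'M[R]_N) (vb : 'I_N -> R) :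
  (0 < N)%N -> 0 < K -> (forall i, 0 < r i) ->
  (forall i j, 0 <= mu i j) -> (forall i j, mu i j = mu j i) ->
  irreducible_mx mu ->
  (forall i, 0 < vb i) -> stationary K r mu vb ->
  (exists2 C1 : R, 0 < C1 &
     forall h : 'I_N -> R, \sum_(i < N) h i * vb i = 0 ->
       C1 * energy h <= dform mu vb h)
  /\
  (forall lam2 : R, smallest_pos_eigenvalue mu vb lam2 ->
     forall h : 'I_N -> R, \sum_(i < N) h i * vb i = 0 ->
       lam2 * energy h <= dform mu vb h).
Proof.
move=> N0 K0 rpos mup sym irr vbp stat.
have [ex|nex] := pselect (exists h, dot h vb = 0 /\ energy h = 1).
  have [hs [hsV hs1 hmin]] := minimizer mu ex.
  have [mpos part2 eig] := core mup sym irr vbp hsV hs1 hmin.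
  split.
    by exists (Bf mu vb hs hs) => // h hV; rewrite dform_B; exact: part2.
  move=> lam2 [_ lpos lmin] h hV.
  have l2 : lam2 <= Bf mu vb hs hs / 2 by apply: lmin => //; rewrite divr_gt0.
  rewrite dform_B; apply: le_trans (part2 h hV).
  apply: ler_wpM2r; first exact: E_ge0.
  apply: (le_trans l2); rewrite ler_pdivrMr //; lra.
have E0 : forall h, dot h vb = 0 -> energy h = 0.
  move=> h hV; apply/eqP; apply: contraT => En0.
  have Ep : 0 < energy h by rewrite lt_def En0 E_ge0.
  set s := Num.sqrt (energy h).
  have sp : 0 < s by rewrite sqrtr_gt0.
  have s2 : s ^+ 2 = energy h by rewrite sqr_sqrtr // ltW.
  case: nex; exists (fun i => s^-1 * h i); split.
    have -> : dot (fun i => s^-1 * h i) vb = s^-1 * dot h vb.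
      by rewrite /dot mulr_sumr; apply: eq_bigr => i _ /=; ring.
    by rewrite hV mulr0.
  by rewrite E_scale -s2 exprVn mulVf // expf_neq0 // gt_eqF.
split.
  by exists 1 => // h hV; rewrite (E0 h hV) mulr0 dform_B B_ge0.
by move=> lam2 _ h hV; rewrite (E0 h hV) mulr0 dform_B B_ge0.
Qed.
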